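(* Let $\mu$ be a partition of $k$ with $\ell(\mu)$ parts, $(S_1,S_2)$ a couple of pair-partitions of $[2k]$ of type $\mu$, and $G$ the group defined in the context. For each orbit $\Omega$ of the set of pair-partitions of $[2k]$ under the action of $G$ and any $S_0\in\Omega$, the quantity $\frac{2^{|\mathcal{L}(S_0,S_1)|}}{2^{\ell(\mu)}}\,|\Omega|$ is an integer.
   Context: Pair-partitions of $[2k]$ are sets of disjoint two-element subsets with union $[2k]$, identified with fixed-point-free involutions; $\sigma\in\mathfrak{S}_{2k}$ acts by: $\{\sigma(i),\sigma(j)\}\in\sigma\cdot P$ iff $\{i,j\}\in P$. $\mathcal{L}(A,B)$ is the bipartite graph with a black vertex per pair of $A$, a white vertex per pair of $B$, and an edge labeled $i$ for each $i\in[2k]$ joining the pairs containing $i$; it is a disjoint union of loops of lengths $2\ell_1\ge2\ell_2\ge\cdots$, $(\ell_1,\ell_2,\dots)$ is the type of $(A,B)$ and $|\mathcal{L}(A,B)|$ the number of loops. The group $G$: for each loop $L_i$ of $\mathcal{L}(S_1,S_2)$ (length $2\mu_i$) choose $j_{i,1}\in L_i$ and set $j_{i,2}=S_2(j_{i,1})$, $j_{i,3}=S_1(j_{i,2})$, $j_{i,4}=S_2(j_{i,3})$, alternately up to $j_{i,2\mu_i}$; let $r_i\in\mathfrak{S}_{2k}$ send $j_{i,m}$ to $j_{i,2\mu_i+1-m}$ for $m\in[2\mu_i]$ and fix all other elements; $G$ is the group generated by the $r_i$. *)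

(* Defs.v *)
From mathcomp Require Import all_boot all_order all_fingroup.
Set Implicit Arguments. Unset Strict Implicit. Unset Printing Implicit Defensive.

Section PairPartitions.
Variable n : nat.
Local Notation T := 'I_n.

(* Pair-partitions of [n] (n = 2k), identified with fixed-point-free involutions. *)
Definition pair_partitions : {set {perm T}} :=
  [set P : {perm T} | [forall i, (P (P i) == i) && (P i != i)]].

(* Edges (labels i) of L(A,B) are adjacent iff they share a pair of A or of B. *)
Definition ladj (A B : {perm T}) : rel T :=
  fun i j => (j == A i) || (j == B i).

(* The loops of L(A,B), each represented by its set of edge labels
   (a loop of length 2l has 2l labels). *)
Definition loops (A B : {perm T}) : {set {set T}} :=
  [set [set j | connect (ladj A B) i j] | i : T].

Definition nloops (A B : {perm T}) : nat := #|loops A B|.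

Definition ltype (A B : {perm T}) : seq nat :=
  sort geq [seq (#|L| %/ 2)%N | L : {set T} in loops A B].

(* Walk along a loop of L(S1,S2) starting at a:
   jseq 0 = a (= j_1), j_{m+1} = S2 j_m if m odd (1-indexed), S1 j_m otherwise. *)
Fixpoint jseq (S1 S2 : {perm T}) (a : T) (m : nat) : T :=
  match m with
  | 0 => a
  | m'.+1 => if ~~ odd m' then S2 (jseq S1 S2 a m') else S1 (jseq S1 S2 a m')
  end.

(* The map r_L: reverses the walk of the loop L starting at the base point b L,
   fixes everything outside L. *)
Definition rfun (S1 S2 : {perm T}) (b : {set T} -> T) (L : {set T}) (x : T) : T :=
  if x \in L then
    let m := find (fun m => jseq S1 S2 (b L) m == x) (iota 0 #|L|) in
    jseq S1 S2 (b L) (#|L|.-1 - m)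
  else x.

Definition Ggen (S1 S2 : {perm T}) (b : {set T} -> T) : {set {perm T}} :=
  [set p : {perm T} | [exists L in loops S1 S2, [forall x, p x == rfun S1 S2 b L x]]].

Definition Ggroup (S1 S2 : {perm T}) (b : {set T} -> T) : {group {perm T}} :=
  <<Ggen S1 S2 b>>%G.

(* Orbit of P under the action sigma . P = sigma o P o sigma^{-1}, i.e. P ^ sigma. *)
Definition pp_orbit (H : {set {perm T}}) (P : {perm T}) : {set {perm T}} :=
  [set (P ^ g)%g | g in H].

End PairPartitions.

Definition is_partition (mu : seq nat) (k : nat) : Prop :=
  [/\ sumn mu = k, sorted geq mu & all (fun x => 0 < x) mu].

(* Main.v *)
Require Import Defs.
From mathcomp Require Import all_boot all_order all_fingroup zify.
Set Implicit Arguments. Unset Strict Implicit. Unset Printing Implicit Defensive.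
Module Walk.

Section Walk.
Variable n : nat.
Local Notation T := 'I_n.
Variables A B : {perm T}.
Hypothesis AK : forall x, A (A x) = x.
Hypothesis BK : forall x, B (B x) = x.
Hypothesis Afp : forall x, A x != x.
Hypothesis Bfp : forall x, B x != x.
Variable a : T.
Local Notation e := (ladj A B).
Local Notation L := [set y | connect e a y].
Local Notation j := (jseq A B a).
Local Notation N := #|L|.

Definition X (m : nat) := if ~~ odd m then B else A.
Lemma jS m : j m.+1 = X m (j m). Proof. by rewrite /X /=; case: ifP. Qed.
Lemma XK m x : X m (X m x) = x. Proof. by rewrite /X; case: ifP. Qed.
Lemma Xfp m x : X m x != x. Proof. by rewrite /X; case: ifP. Qed.
Lemma jP m : j m = X m (j m.+1). Proof. by rewrite jS XK. Qed.

Lemma rep t s : (forall t', t' < t -> forall s', s' < t' -> j s' != j t') ->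
  s < t -> j s = j t -> s = 0 /\ ~~ odd t.
Proof.
move=> IH st E.
case: t IH st E => [|t] IH st E; first by [].
case: s st E => [|s] st E.
  split => //; apply/negP => ot.
  have jt : j t = j 1 by rewrite jP -E /X -[~~ odd t]/(odd t.+1) ot.
  case: t IH st E ot jt => [|[|t]] IH st E ot jt.
  - by move: (Bfp a); rewrite -[B a]/(j 1) -E eqxx.
  - by [].
  - by move: (IH t.+2 (ltnSn _) 1 isT); rewrite jt eqxx.
have [par|par] := boolP (odd s == odd t).
  have : j s = j t by rewrite (jP s) (jP t) E /X (eqP par).
  move/eqP; rewrite (negbTE (IH t (ltnSn _) s st)) //.
have E2 : j s.+2 = j t.
  rewrite jS (jP t) E /X /=.
  by move: par; case: (odd s); case: (odd t).
case: (ltngtP s.+2 t) => c.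
- by move: (IH t (ltnSn _) s.+2 c); rewrite E2 eqxx.
- have ts : t = s.+1 by apply/eqP; rewrite eqn_leq -ltnS c /=.
  by move: (Xfp s.+1 (j s.+1)); rewrite -jS E2 -ts eqxx.
- by move: par; rewrite -c /= negbK eqxx.
Qed.

Lemma jinL m : j m \in L.
Proof.
elim: m => [|m IH]; first by rewrite inE connect0.
rewrite inE jS; rewrite inE in IH; apply: (connect_trans IH); apply: connect1.
by rewrite /ladj /X; case: ifP => _; rewrite eqxx ?orbT.
Qed.

Lemma closure t : 0 < t -> ~~ odd t -> j t = a -> N <= t.
Proof.
move=> t0 et jt.
pose S := [set j (nat_of_ord m) | m : 'I_t].
have inS m : m < t -> j m \in S by move=> mt; apply/imsetP; exists (Ordinal mt).
have SA x : x \in S -> A x \in S.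
  case/imsetP => -[m mt] _ -> /=.
  case om: (odd m).
    have -> : A (j m) = j m.+1 by rewrite jS /X om.
    case: (ltngtP m.+1 t) => c; first exact: inS.
    - by move: c; rewrite ltnS leqNgt mt.
    - by rewrite c jt -[a]/(j 0) inS.
  case: m mt om => [|m] mt om.
    have ot1 : odd t.-1 by move: et; clear -t0; case: t t0 => //= t _; rewrite negbK.
    have E1 : j (t.-1).+1 = A (j t.-1) by rewrite jS /X ot1.
    rewrite prednK // jt in E1.
    rewrite /= E1 AK; apply: inS; by rewrite prednK.
  have om' : odd m by move: om => /= /negbFE.
  by rewrite (jS m) /X om' /= AK; apply: inS; apply: ltnW.
have SB x : x \in S -> B x \in S.
  case/imsetP => -[m mt] _ -> /=.
  case om: (odd m).
    case: m mt om => [|m] mt om //.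
    have om' : ~~ odd m by move: om => /=.
    by rewrite (jS m) /X om' /= BK; apply: inS; apply: ltnW.
  have -> : B (j m) = j m.+1 by rewrite jS /X om.
  apply: inS.
  case: (ltngtP m.+1 t) => c //; first by move: c; rewrite ltnS leqNgt mt.
  by move: et; rewrite -c /= om.
have cl : closed e S.
  move=> x y; rewrite /ladj => /orP[] /eqP ->.
  - by apply/idP/idP => [/SA|/SA]; rewrite ?AK.
  - by apply/idP/idP => [/SB|/SB]; rewrite ?BK.
have sub : L \subset S.
  apply/subsetP => y; rewrite inE => ay.
  by rewrite -(closed_connect cl ay) -[a]/(j 0) inS.
apply: (leq_trans (subset_leq_card sub)).
by apply: (leq_trans (leq_imset_card _ _)); rewrite card_ord.
Qed.

Lemma juniq t : t < N -> forall s, s < t -> j s != j t.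
Proof.
elim/ltn_ind: t => t IH tN s st; apply/eqP => E.
have [s0 et] := rep (fun t' lt => IH t' lt (ltn_trans lt tN)) st E.
subst s.
have := closure st et (esym E); by rewrite leqNgt tN.
Qed.

Lemma jinj m1 m2 : m1 < N -> m2 < N -> j m1 = j m2 -> m1 = m2.
Proof.
move=> h1 h2 E; case: (ltngtP m1 m2) => // c.
- by move: (juniq h2 c); rewrite E eqxx.
- by move: (juniq h1 c); rewrite E eqxx.
Qed.

Lemma Lcover x : x \in L -> exists2 m, m < N & j m = x.
Proof.
move=> xL.
pose S := [set j (nat_of_ord m) | m : 'I_N].
have SL : S \subset L by apply/subsetP => y /imsetP [m _ ->]; exact: jinL.
have cS : #|S| = N.
  rewrite card_imset ?card_ord // => m1 m2 E; apply: val_inj; exact: (jinj (ltn_ord m1) (ltn_ord m2) E).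
have : S == L by rewrite eqEcard SL cS leqnn.
move/eqP => ES; move: xL; rewrite -ES => /imsetP [m _ ->].
by exists (nat_of_ord m); rewrite ?cS.
Qed.

Lemma Npos : 0 < N.
Proof. by apply/card_gt0P; exists a; rewrite inE connect0. Qed.

Lemma Neven : ~~ odd N.
Proof.
have [m mN E] := Lcover (jinL N).
have [_ ->] // := rep (fun t' lt => juniq lt) mN E.
Qed.

Definition idx x := find (fun m => j m == x) (iota 0 N).

Lemma idx_spec x : x \in L -> idx x < N /\ j (idx x) = x.
Proof.
move=> xL; have [m mN E] := Lcover xL.
have hs : has (fun m => j m == x) (iota 0 N).
  by apply/hasP; exists m; rewrite ?mem_iota ?E //.
have lt : idx x < N by rewrite /idx -[X in _ < X](size_iota 0 N) -has_find.
split => //; have := nth_find 0 hs; rewrite -/(idx x) nth_iota //.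
by move/eqP.
Qed.

Lemma idx_j m : m < N -> idx (j m) = m.
Proof.
move=> mN; have [h1 h2] := idx_spec (jinL m); exact: jinj.
Qed.

Variable bb : {set T} -> T.
Hypothesis hbb : bb L = a.

Local Notation r := (rfun A B bb L).

Lemma rE x : x \in L -> r x = j (N.-1 - idx x).
Proof. by move=> xL; rewrite /rfun xL hbb. Qed.

Lemma rout x : x \notin L -> r x = x.
Proof. by rewrite /rfun => /negbTE ->. Qed.

Lemma rin x : x \in L -> r x \in L.
Proof. by move=> xL; rewrite rE // jinL. Qed.

Lemma rK x : r (r x) = x.
Proof.
case xL: (x \in L); last by rewrite !rout ?xL.
have [h1 h2] := idx_spec xL.
have N0 := Npos.
rewrite (rE (rin xL)) rE // idx_j; last by lia.
by rewrite subKn ?h2 //; lia.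
Qed.

Lemma rfp x : x \in L -> r x != x.
Proof.
move=> xL; have [h1 h2] := idx_spec xL.
rewrite rE //; apply/eqP; rewrite -{2}h2 => /jinj E.
have N0 := Npos.
have E' := E ltac:(lia) h1.
have : N = (idx x + idx x).+1 by lia.
by move: Neven => /[swap] ->; rewrite /= oddD addbb.
Qed.

End Walk.
End Walk.
Import Walk.
Module Glob.

Section Glob.
Variable n : nat.
Local Notation T := 'I_n.
Variables S1 S2 : {perm T}.
Variable b : {set T} -> T.
Hypothesis hS1 : S1 \in pair_partitions n.
Hypothesis hS2 : S2 \in pair_partitions n.
Hypothesis hb : forall L, L \in loops S1 S2 -> b L \in L.

Lemma pp_inv (P : {perm T}) : P \in pair_partitions n -> (forall x, P (P x) = x) /\ (forall x, P x != x).
Proof.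
rewrite inE => /forallP h; split => x; by case/andP: (h x) => /eqP.
Qed.

Let K1 := (pp_inv hS1).1.
Let F1 := (pp_inv hS1).2.
Let K2 := (pp_inv hS2).1.
Let F2 := (pp_inv hS2).2.

Local Notation e := (ladj S1 S2).
Definition lp (x : T) := [set y | connect e x y].

Lemma e_sym : symmetric e.
Proof.
move=> x y; rewrite /ladj.
have E (P : {perm T}) : (forall z, P (P z) = z) -> (y == P x) = (x == P y).
  by move=> PK; apply/eqP/eqP => ->.
by rewrite (E _ K1) (E _ K2).
Qed.

Lemma lp_loop x : lp x \in loops S1 S2.
Proof. by apply/imsetP; exists x. Qed.

Lemma lp_self x : x \in lp x.
Proof. by rewrite inE connect0. Qed.

Lemma lp_eq x y : y \in lp x -> lp y = lp x.
Proof.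
rewrite inE => xy; apply/setP => z; rewrite !inE.
apply/idP/idP => h; first exact: connect_trans xy h.
rewrite (sym_connect_sym e_sym) in xy; exact: connect_trans xy h.
Qed.

Lemma loop_mem L x : L \in loops S1 S2 -> x \in L -> L = lp x.
Proof. by case/imsetP => i _ -> xi; rewrite (lp_eq xi). Qed.

Definition r (L : {set T}) := rfun S1 S2 b L.

Lemma loop_form L : L \in loops S1 S2 -> exists a, L = lp a /\ b (lp a) = a.
Proof.
move=> hL; exists (b L); have E := loop_mem hL (hb hL).
by rewrite -E.
Qed.

Lemma rK L x : L \in loops S1 S2 -> r L (r L x) = x.
Proof. by case/loop_form => a [-> ha]; exact: (rK K1 K2 F1 F2 ha). Qed.
Lemma rin L x : L \in loops S1 S2 -> x \in L -> r L x \in L.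
Proof. by case/loop_form => a [-> ha]; exact: (Walk.rin ha). Qed.
Lemma rout (L : {set T}) (x : T) : x \notin L -> r L x = x.
Proof. by rewrite /r /rfun => /negbTE ->. Qed.
Lemma rfp L x : L \in loops S1 S2 -> x \in L -> r L x != x.
Proof. by case/loop_form => a [-> ha]; exact: (rfp K1 K2 F1 F2 ha). Qed.

Definition R (I : {set {set T}}) (x : T) := if lp x \in I then r (lp x) x else x.

Lemma lp_r x : lp (r (lp x) x) = lp x.
Proof. by apply: lp_eq; apply: rin; rewrite ?lp_loop ?lp_self. Qed.

Lemma RR I J x : R J (R I x) = R ((I :\: J) :|: (J :\: I)) x.
Proof.
rewrite /R; case hI: (lp x \in I); case hJ: (lp x \in J);
  rewrite ?lp_r ?hI ?hJ !inE ?hI ?hJ //=.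
by rewrite rK // lp_loop.
Qed.

Lemma R_loops I x : R (I :&: loops S1 S2) x = R I x.
Proof. by rewrite /R inE lp_loop andbT. Qed.

Definition Qset : {set {perm T}} :=
  [set g : {perm T} | [exists I : {set {set T}}, [forall x, g x == R I x]]].

Lemma QsetP (g : {perm T}) : reflect (exists I, forall x, g x = R I x) (g \in Qset).
Proof.
rewrite inE; apply: (iffP existsP) => -[I h]; exists I.
- by move=> x; apply/eqP; move/forallP: h.
- by apply/forallP => x; rewrite h.
Qed.

Lemma Qgroup_set : group_set Qset.
Proof.
apply/group_setP; split.
  apply/QsetP; exists set0 => x; by rewrite perm1 /R inE.
move=> g h /QsetP [I hI] /QsetP [J hJ]; apply/QsetP.
exists ((I :\: J) :|: (J :\: I)) => x; by rewrite permM hI hJ RR.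
Qed.

Canonical QG := Group Qgroup_set.

Definition pr L (hL : L \in loops S1 S2) : {perm T} := perm (can_inj (fun x => rK x hL)).

Lemma G_sub_Q : Ggroup S1 S2 b \subset Qset.
Proof.
rewrite /Ggroup /= -[Qset]/(gval QG) gen_subG; apply/subsetP => p.
rewrite inE => /existsP [L /andP [hL /forallP hp]]; apply/QsetP.
exists [set L] => x; rewrite (eqP (hp x)) /R inE.
case xL: (x \in L).
  by rewrite -(loop_mem hL xL) eqxx.
have -> : (lp x == L) = false.
  by apply/negbTE; apply: contraFN xL => /eqP <-; rewrite lp_self.
by rewrite -/(r L x) rout ?xL.
Qed.

Lemma G_has_R (I : {set {set T}}) : I \subset loops S1 S2 ->
  exists2 g, g \in Ggroup S1 S2 b & forall x, g x = R I x.
Proof.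
move: {2}#|I| (erefl #|I|) => m; elim: m I => [|m IH] I cI sI.
  exists 1%g; first exact: group1.
  move/eqP: cI; rewrite cards_eq0 => /eqP ->; move=> x; by rewrite perm1 /R inE.
have : 0 < #|I| by rewrite cI.
case/card_gt0P => L LI.
have hL : L \in loops S1 S2 by apply: (subsetP sI).
have cI' : #|I :\ L| = m by move: cI; rewrite (cardsD1 L) LI add1n => -[].
have sI' : I :\ L \subset loops S1 S2 by apply: subset_trans sI; apply: subsetDl.
have [g gG hg] := IH (I :\ L) cI' sI'.
exists (g * pr hL)%g.
  apply: groupM => //; apply: mem_gen; rewrite inE; apply/existsP; exists L.
  by rewrite hL /=; apply/forallP => x; rewrite permE.
move=> x; rewrite permM permE hg.
have -> : r L (R (I :\ L) x) = R [set L] (R (I :\ L) x).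
  rewrite /R !inE; case: ifP => h1.
    case xL: (x \in L).
      by move: h1; rewrite -(loop_mem hL xL) eqxx.
    have E : (lp x == L) = false.
      by apply/negbTE; apply: contraFN xL => /eqP <-; rewrite lp_self.
    rewrite lp_r E rout //; apply: contraFN E => h; by rewrite (loop_mem hL h) lp_r.
  case xL: (x \in L).
    by rewrite -(loop_mem hL xL) eqxx.
  have E : (lp x == L) = false.
    by apply/negbTE; apply: contraFN xL => /eqP <-; rewrite lp_self.
  by rewrite E rout // xL.
rewrite RR; congr R; apply/setP => y; rewrite !inE.
by case: eqP => [->|_]; rewrite ?LI /=; case: (y \in I).
Qed.

Definition phi (g : {perm T}) := [set L in loops S1 S2 | g (b L) != b L].

Lemma lp_b L : L \in loops S1 S2 -> lp (b L) = L.
Proof. by move=> hL; rewrite -(loop_mem hL (hb hL)). Qed.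

Lemma phi_R (g : {perm T}) I : (forall x, g x = R I x) -> phi g = I :&: loops S1 S2.
Proof.
move=> hg; apply/setP => L; rewrite !inE hg /R.
case hL: (L \in loops S1 S2); rewrite ?andbF ?andbT //=.
rewrite lp_b //; case: (L \in I) => //.
  by rewrite rfp ?hb.
by rewrite eqxx.
Qed.

Lemma Q_R (g : {perm T}) : g \in Qset -> forall x, g x = R (phi g) x.
Proof. by case/QsetP => I hI x; rewrite (phi_R hI) R_loops hI. Qed.

Lemma phi_inj (g h : {perm T}) : g \in Qset -> h \in Qset -> phi g = phi h -> g = h.
Proof. by move=> gQ hQ E; apply/permP => x; rewrite (Q_R gQ) (Q_R hQ) E. Qed.

Lemma cardG : #|Ggroup S1 S2 b| = 2 ^ #|loops S1 S2|.
Proof.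
rewrite -card_powerset -(@card_in_imset _ _ phi).
  suff -> : [set phi x | x in Ggroup S1 S2 b] = powerset (loops S1 S2) by [].
  apply/eqP; rewrite eqEsubset; apply/andP; split.
    apply/subsetP => I /imsetP [g _ ->]; rewrite inE.
    by apply/subsetP => L; rewrite inE => /andP[].
  apply/subsetP => I; rewrite inE => sI.
  have [g gG hg] := G_has_R sI.
  apply/imsetP; exists g => //; rewrite (phi_R hg).
  by apply/esym/setIidPl.
move=> g h gG hG; apply: phi_inj; exact: (subsetP G_sub_Q).
Qed.

Variable S0 : {perm T}.

Definition psi (g : {perm T}) :=
  [set C in loops S0 S1 | [exists x in C, g x != x]].

Lemma Mclosed g : g \in ('C_(Ggroup S1 S2 b)[S0])%g ->
  closed (ladj S0 S1) [pred y | g y != y].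
Proof.
case/setIP => gG /cent1P cg.
have gQ : g \in Qset by apply: (subsetP G_sub_Q).
move=> y z; rewrite /ladj => /orP[] /eqP ->.
- have : g (S0 y) = S0 (g y) by rewrite -permM -cg permM.
  by rewrite !inE => ->; rewrite (inj_eq perm_inj).
- rewrite !inE !(Q_R gQ) /R.
  have -> : lp (S1 y) = lp y.
    apply: lp_eq; rewrite inE; apply: connect1; by rewrite /ladj eqxx.
  case: ifP => _; last by rewrite !eqxx.
  rewrite !rfp ?lp_loop ?lp_self //.
  by rewrite -(lp_eq (y := S1 y)) ?lp_self // inE; apply: connect1; rewrite /ladj eqxx.
Qed.

Lemma psi_char g x : g \in ('C_(Ggroup S1 S2 b)[S0])%g ->
  (g x != x) = ([set y | connect (ladj S0 S1) x y] \in psi g).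
Proof.
move=> gC; rewrite inE; have -> : [set y | connect (ladj S0 S1) x y] \in loops S0 S1.
  by apply/imsetP; exists x.
apply/idP/existsP => [h|[y /andP [xy hy]]].
  by exists x; rewrite inE connect0 h.
rewrite inE in xy; by rewrite -[_ != _]/(x \in [pred y | g y != y]) (closed_connect (Mclosed gC) xy).
Qed.

Lemma cardC : #|('C_(Ggroup S1 S2 b)[S0])%g| <= 2 ^ #|loops S0 S1|.
Proof.
rewrite -card_powerset -(@card_in_imset _ _ psi).
  apply: subset_leq_card; apply/subsetP => I /imsetP [g _ ->]; rewrite inE.
  by apply/subsetP => L; rewrite inE => /andP[].
move=> g h gC hC E.
have gG := subsetP (subsetIl _ _) g gC.
have hG := subsetP (subsetIl _ _) h hC.
apply: phi_inj; try exact: (subsetP G_sub_Q).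
apply/setP => L; rewrite !inE; case hL: (L \in loops S1 S2) => //=.
by rewrite !psi_char // E.
Qed.

End Glob.
End Glob.
Import Glob.
Unset Implicit Arguments.
Theorem lemma3p11 (k : nat) (mu : seq nat) (S1 S2 : {perm 'I_(2 * k)})
    (b : {set 'I_(2 * k)} -> 'I_(2 * k)) :
  is_partition mu k ->
  S1 \in pair_partitions (2 * k) -> S2 \in pair_partitions (2 * k) ->
  ltype S1 S2 = mu ->
  (forall L, L \in loops S1 S2 -> b L \in L) ->
  forall Omega : {set {perm 'I_(2 * k)}},
    (exists2 P, P \in pair_partitions (2 * k) &
        Omega = pp_orbit (Ggroup S1 S2 b) P) ->
    forall S0, S0 \in Omega ->
      (2 ^ size mu %| 2 ^ nloops S0 S1 * #|Omega|)%N.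
Proof.
move=> _ h1 h2 hty hb Omega [P _ ->] S0 S0in.
have S0in' : S0 \in (P ^: Ggroup S1 S2 b)%g := S0in.
have -> : pp_orbit (Ggroup S1 S2 b) P = (S0 ^: Ggroup S1 S2 b)%g.
  by apply/esym/class_eqP.
rewrite -index_cent1.
have sz : size mu = #|loops S1 S2| by rewrite -hty /ltype size_sort size_image.
have La := Lagrange (subsetIl (Ggroup S1 S2 b) ('C[S0])%g).
rewrite (cardG h1 h2 hb) in La.
have [d dl Ed] : exists2 d, d <= #|loops S1 S2| & #|('C_(Ggroup S1 S2 b)[S0])%g| = 2 ^ d.
  by apply/dvdn_pfactor => //; rewrite -La dvdn_mulr.
have dc : d <= nloops S0 S1.
  by rewrite -(@leq_exp2l 2) // -Ed; apply: (Glob.cardC h1 h2 hb S0).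
rewrite sz -La Ed -(subnK dc) expnD -mulnA dvdn_mull //.
Qed.
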